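(* Let $Q$ be a connected quandle. The following are equivalent: (i) for every set $S$, every quandle cocycle of $Q$ with values in $\mathrm{Sym}_S$ is cohomologous to the trivial cocycle; (ii) for every group $K$, every quandle cocycle of $Q$ with values in $K$ is cohomologous (via maps $\gamma:Q\to K$) to the trivial cocycle; (iii) $Q$ is simply connected.
   Context: A quandle is a set $Q$ with a binary operation $*$ such that every left translation $L_x:y\mapsto x*y$ is bijective, $x*(y*z)=(x*y)*(x*z)$ and $x*x=x$; $Q$ is connected if $\langle L_x:x\in Q\rangle$ is transitive on $Q$. For a group $K$, a quandle cocycle with values in $K$ is $\theta:Q\times Q\to K$ with $\theta_{x*y,x*z}\theta_{x,z}=\theta_{x,y*z}\theta_{y,z}$ and $\theta_{x,x}=1$; it is cohomologous to the trivial cocycle (constantly $1$) if there is $\gamma:Q\to K$ with $\theta_{x,y}=\gamma_{x*y}\gamma_y^{-1}$ for all $x,y$. A cover of $Q$ is a quandle $E$ with a surjective homomorphism $\pi:E\to Q$ such that $\pi(u)=\pi(v)$ implies $L_u=L_v$; $Q$ is simply connected if $Q$ is connected and every cover of $Q$ is equivalent (isomorphic over $Q$) to a trivial cover $Q\times S$ with operation $(x,a)*(y,b)=(x*y,b)$. *)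

(* Defs.v *)
From Stdlib Require Import Setoid FunctionalExtensionality ProofIrrelevance.

Set Implicit Arguments.

Definition bij {A B : Type} (f : A -> B) : Prop :=
  exists g : B -> A, (forall a, g (f a) = a) /\ (forall b, f (g b) = b).

Record quandle := Quandle {
  qcar :> Type;
  qop : qcar -> qcar -> qcar;
  qop_bij : forall x : qcar, bij (qop x);
  qop_dist : forall x y z : qcar, qop x (qop y z) = qop (qop x y) (qop x z);
  qop_idem : forall x : qcar, qop x x = x }.

Arguments qop {q}.
Arguments qop_bij {q}.
Arguments qop_dist {q}.
Arguments qop_idem {q}.

(** Orbits of the group <L_x : x in Q> (the inner group action):
    the smallest set containing x closed under every L_z and every L_z^{-1}. *)
Inductive inner_orbit {Q : quandle} (x : Q) : Q -> Prop :=
| io_refl : inner_orbit x x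
| io_L : forall y z : Q, inner_orbit x y -> inner_orbit x (qop z y)
| io_Linv : forall y z : Q, inner_orbit x (qop z y) -> inner_orbit x y.

Definition connected (Q : quandle) : Prop := forall x y : Q, inner_orbit x y.

Definition qhom {E Q : quandle} (f : E -> Q) : Prop :=
  forall u v : E, f (qop u v) = qop (f u) (f v).

Record group := Group {
  gcar :> Type;
  gmul : gcar -> gcar -> gcar;
  gone : gcar;
  ginv : gcar -> gcar;
  gmulA : forall a b c, gmul a (gmul b c) = gmul (gmul a b) c;
  gmul1 : forall a, gmul gone a = a;
  gmulV : forall a, gmul (ginv a) a = gone }.

Arguments gmul {g}.
Arguments gone {g}.
Arguments ginv {g}.

Definition quandle_cocycle {Q : quandle} {K : group} (theta : Q -> Q -> K) : Prop :=
  (forall x y z : Q,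
      gmul (theta (qop x y) (qop x z)) (theta x z)
      = gmul (theta x (qop y z)) (theta y z))
  /\ (forall x : Q, theta x x = gone).

Definition cohomologous_trivial {Q : quandle} {K : group} (theta : Q -> Q -> K) : Prop :=
  exists gamma : Q -> K, forall x y : Q, theta x y = gmul (gamma (qop x y)) (ginv (gamma y)).

Record sym_elt (S : Type) := SymElt {
  sfun : S -> S;
  sinv : S -> S;
  sfunK : forall s, sinv (sfun s) = s;
  sinvK : forall s, sfun (sinv s) = s }.

Lemma sym_elt_eq (S : Type) (p q : sym_elt S) :
  (forall s, sfun p s = sfun q s) -> p = q.
Proof.
  destruct p as [f g fK gK], q as [f' g' fK' gK']; simpl; intros H.
  assert (Ef : f = f') by (apply functional_extensionality; exact H).
  subst f'.
  assert (Eg : g = g').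
  { apply functional_extensionality; intro s.
    rewrite <- (gK s) at 2. rewrite fK'. reflexivity. }
  subst g'.
  rewrite (proof_irrelevance _ fK fK'), (proof_irrelevance _ gK gK').
  reflexivity.
Qed.

Definition sym_mul (S : Type) (p q : sym_elt S) : sym_elt S.
Proof.
  refine (@SymElt S (fun s => sfun p (sfun q s)) (fun s => sinv q (sinv p s)) _ _).
  - intro s. rewrite sfunK, sfunK. reflexivity.
  - intro s. rewrite sinvK, sinvK. reflexivity.
Defined.

Definition sym_one (S : Type) : sym_elt S :=
  @SymElt S (fun s => s) (fun s => s) (fun s => eq_refl) (fun s => eq_refl).

Definition sym_inv (S : Type) (p : sym_elt S) : sym_elt S :=
  @SymElt S (sinv p) (sfun p) (sinvK p) (sfunK p).

Definition Sym (S : Type) : group.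
Proof.
  refine (@Group (sym_elt S) (@sym_mul S) (sym_one S) (@sym_inv S) _ _ _).
  - intros a b c. apply sym_elt_eq. intro s. reflexivity.
  - intros a. apply sym_elt_eq. intro s. reflexivity.
  - intros a. apply sym_elt_eq. intro s. simpl. apply sfunK.
Defined.

Definition triv_op (Q : quandle) (S : Type) (u v : Q * S) : Q * S :=
  (qop (fst u) (fst v), snd v).

Definition trivial_cover (Q : quandle) (S : Type) : quandle.
Proof.
  refine (@Quandle (Q * S)%type (@triv_op Q S) _ _ _).
  - intros [x a]. destruct (qop_bij x) as [g [Hg1 Hg2]].
    exists (fun v => (g (fst v), snd v)). split.
    + intros [y b]. unfold triv_op; simpl. rewrite Hg1. reflexivity.
    + intros [y b]. unfold triv_op; simpl. rewrite Hg2. reflexivity.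
  - intros [x a] [y b] [z c]. unfold triv_op; simpl. rewrite qop_dist. reflexivity.
  - intros [x a]. unfold triv_op; simpl. rewrite qop_idem. reflexivity.
Defined.

Definition is_cover {E Q : quandle} (pi : E -> Q) : Prop :=
  qhom pi
  /\ (forall x : Q, exists u : E, pi u = x)
  /\ (forall u v : E, pi u = pi v -> forall w : E, qop u w = qop v w).

Definition cover_is_trivial {E Q : quandle} (pi : E -> Q) : Prop :=
  exists (S : Type) (f : E -> trivial_cover Q S),
    bij f /\ qhom f /\ (forall u : E, fst (f u) = pi u).

Definition simply_connected (Q : quandle) : Prop :=
  connected Q /\
  forall (E : quandle) (pi : E -> Q), is_cover pi -> cover_is_trivial pi.

(* Main.v *)
Require Import Defs.
From Stdlib Require Import Classical ClassicalEpsilon FunctionalExtensionality ProofIrrelevance.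

Lemma gmulA' {K : group} (a b c : K) : gmul a (gmul b c) = gmul (gmul a b) c.
Proof. apply gmulA. Qed.
Lemma gmul1' {K : group} (a : K) : gmul gone a = a.
Proof. apply gmul1. Qed.
Lemma gmulV' {K : group} (a : K) : gmul (ginv a) a = gone.
Proof. apply gmulV. Qed.
Section G.
Variable K : group.
Lemma gmul1r (a : K) : gmul a gone = a.
Proof.
  assert (Hb : forall b : K, gmul b b = b -> b = gone).
  { intros b Hbb. rewrite <- (gmul1' b) at 1. rewrite <- (gmulV' b).
    rewrite <- gmulA', Hbb. reflexivity. }
  assert (Hr : gmul a (ginv a) = gone).
  { apply Hb. rewrite <- gmulA', (gmulA' (ginv a)), gmulV', gmul1'. reflexivity. }
  rewrite <- (gmulV' a), gmulA', Hr, gmul1'. reflexivity.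
Qed.
Lemma gmulVr (a : K) : gmul a (ginv a) = gone.
Proof.
  assert (Hb : forall b : K, gmul b b = b -> b = gone).
  { intros b Hbb. rewrite <- (gmul1' b) at 1. rewrite <- (gmulV' b).
    rewrite <- gmulA', Hbb. reflexivity. }
  apply Hb. rewrite <- gmulA', (gmulA' (ginv a)), gmulV', gmul1'. reflexivity.
Qed.
Lemma gcancel (t b : K) : gmul (gmul t b) (ginv b) = t.
Proof. rewrite <- gmulA', gmulVr, gmul1r. reflexivity. Qed.
End G.

Definition lam {K : group} (k : K) : Sym K.
Proof.
  refine (@SymElt K (fun a => gmul k a) (fun a => gmul (ginv k) a) _ _).
  - intro s. rewrite gmulA', gmulV', gmul1'. reflexivity.
  - intro s. rewrite gmulA', gmulVr, gmul1'. reflexivity.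
Defined.

Lemma i_to_ii (Q : quandle) :
  (forall (S : Type) (theta : Q -> Q -> Sym S),
       quandle_cocycle theta -> cohomologous_trivial theta) ->
  (forall (K : group) (theta : Q -> Q -> K),
       quandle_cocycle theta -> cohomologous_trivial theta).
Proof.
  intros Hi K theta [Hc Hd].
  destruct (Hi K (fun x y => lam (theta x y))) as [g Hg].
  - split.
    + intros x y z. apply sym_elt_eq. intro s. simpl.
      rewrite !gmulA', Hc. reflexivity.
    + intros x. apply sym_elt_eq. intro s. simpl. rewrite Hd, gmul1'. reflexivity.
  - exists (fun x => sfun (g x) gone). intros x y.
    pose proof (f_equal (fun p => sfun p (sfun (g y) gone)) (Hg x y)) as H.
    simpl in H. rewrite sfunK in H. rewrite <- H. symmetry. apply gcancel.
Qed.

Definition ext_op {Q : quandle} {K : group} (theta : Q -> Q -> K) (u v : Q * K) : Q * K :=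
  (qop (fst u) (fst v), gmul (theta (fst u) (fst v)) (snd v)).

Definition ext_quandle {Q : quandle} {K : group} (theta : Q -> Q -> K)
  (Ht : quandle_cocycle theta) : quandle.
Proof.
  refine (@Quandle (Q * K)%type (ext_op theta) _ _ _).
  - intros [x a]. destruct (qop_bij x) as [h [H1 H2]].
    exists (fun v => (h (fst v), gmul (ginv (theta x (h (fst v)))) (snd v))). split.
    + intros [y b]. unfold ext_op; simpl. rewrite H1, gmulA', gmulV', gmul1'. reflexivity.
    + intros [y b]. unfold ext_op; simpl. rewrite H2, gmulA', gmulVr, gmul1'. reflexivity.
  - intros [x a] [y b] [z c]. unfold ext_op; simpl. destruct Ht as [Hc _].
    rewrite qop_dist, !gmulA', Hc. reflexivity.
  - intros [x a]. unfold ext_op; simpl. destruct Ht as [_ Hd].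
    rewrite qop_idem, Hd, gmul1'. reflexivity.
Defined.

Lemma iii_to_ii (Q : quandle) :
  simply_connected Q ->
  (forall (K : group) (theta : Q -> Q -> K),
       quandle_cocycle theta -> cohomologous_trivial theta).
Proof.
  intros [_ Hsc] K theta Ht.
  destruct (Hsc (ext_quandle _ Ht) fst) as [S [f [[finv [Hf1 Hf2]] [Hfh Hfst]]]].
  - split; [|split].
    + intros u v. reflexivity.
    + intros x. exists (x, gone). reflexivity.
    + intros [x a] [y b] E [z c]. simpl in E. subst. reflexivity.
  - destruct (classic (inhabited Q)) as [[x0] | Hn].
    2:{ exists (fun _ => gone). intros x. exfalso. apply Hn. exact (inhabits x). }
    set (s0 := snd (f (x0, gone))).
    exists (fun x => snd (finv (x, s0))). intros x y.
    assert (Hfi : forall z, f (z, snd (finv (z, s0))) = (z, s0)).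
    { intros z. pose proof (Hfst (finv (z, s0))) as E. rewrite Hf2 in E. simpl in E.
      destruct (finv (z, s0)) as [z' b] eqn:Ez. simpl in E |- *. subst z'.
      rewrite <- Ez. apply Hf2. }
    set (b := snd (finv (y, s0))).
    pose proof (Hfh (x, gone) (y, b)) as H. simpl in H.
    unfold b in H. rewrite Hfi in H. unfold triv_op in H. simpl in H.
    unfold ext_op in H. simpl in H. rewrite Hfst in H. simpl in H.
    assert (E : finv (qop x y, s0) = (qop x y, gmul (theta x y) (snd (finv (y, s0))))).
    { rewrite <- H. apply Hf1. }
    rewrite E. simpl. symmetry. apply gcancel.
Qed.

Lemma my_choice {A B : Type} (R : A -> B -> Prop) :
  (forall x, exists y, R x y) -> exists f : A -> B, forall x, R x (f x).
Proof.
  intros H. exists (fun x => proj1_sig (constructive_indefinite_description _ (H x))).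
  intro x. exact (proj2_sig (constructive_indefinite_description _ (H x))).
Qed.

Lemma ii_to_iii (Q : quandle) (HQ : connected Q) :
  (forall (K : group) (theta : Q -> Q -> K),
       quandle_cocycle theta -> cohomologous_trivial theta) ->
  simply_connected Q.
Proof.
  intros Hii. split; [exact HQ|]. intros E pi [Hh [Hs Hc]].
  destruct (classic (inhabited Q)) as [[x0]|Hn].
  2:{ exists unit, (fun u => (pi u, tt)). split; [|split].
      - exists (fun v : Q * unit => False_rect E (Hn (inhabits (fst v)))).
        split.
        + intros a. exfalso. apply Hn. exact (inhabits (pi a)).
        + intros [x t]. exfalso. apply Hn. exact (inhabits x).
      - intros u v. simpl. unfold triv_op. simpl. rewrite Hh. reflexivity.
      - intros u. reflexivity. }
  set (S := {u : E | pi u = x0}).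
  destruct (my_choice _ Hs) as [sigma Hsig].
  destruct (my_choice (fun x (g : E -> E) => (forall w, g (qop (sigma x) w) = w)
                         /\ (forall w, qop (sigma x) (g w) = w))
              (fun x => qop_bij (sigma x))) as [Linv HL].
  assert (HL1 : forall x w, Linv x (qop (sigma x) w) = w) by (intros; apply HL).
  assert (HL2 : forall x w, qop (sigma x) (Linv x w) = w) by (intros; apply HL).
  clear HL.
  assert (Qinj : forall x a b : Q, qop x a = qop x b -> a = b).
  { intros x a b Hab. destruct (qop_bij x) as [g [G1 _]].
    rewrite <- (G1 a), <- (G1 b), Hab. reflexivity. }
  assert (HpiL : forall x w, qop x (pi (Linv x w)) = pi w).
  { intros x w. rewrite <- (HL2 x w) at 2. rewrite Hh, Hsig. reflexivity. }
  assert (HP : forall y, exists p : (E -> S) * (S -> E),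
             (forall s, pi (snd p s) = y) /\ (forall s, fst p (snd p s) = s)
             /\ (forall u, pi u = y -> snd p (fst p u) = u)).
  { intros y. pose proof (HQ x0 y) as Ho. induction Ho as [|y z Ho IH|y z Ho IH].
    - destruct (Hs x0) as [u0 Hu0].
      exists (fun u => match excluded_middle_informative (pi u = x0) with
                      | left h => exist _ u h | right _ => exist _ u0 Hu0 end,
              fun s : S => proj1_sig s). simpl. split; [|split].
      + intros s. exact (proj2_sig s).
      + intros [u h]. simpl. destruct (excluded_middle_informative (pi u = x0)) as [h'|h'].
        * f_equal. apply proof_irrelevance.
        * contradiction.
      + intros u h. destruct (excluded_middle_informative (pi u = x0)); [reflexivity|contradiction].
    - destruct IH as [[ph ps] [H1 [H2 H3]]]. simpl in *.
      exists (fun u => ph (Linv z u), fun s => qop (sigma z) (ps s)). simpl. split; [|split].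
      + intros s. rewrite Hh, Hsig, H1. reflexivity.
      + intros s. rewrite HL1, H2. reflexivity.
      + intros u Hu. rewrite H3; [apply HL2|]. apply (Qinj z). rewrite HpiL, Hu. reflexivity.
    - destruct IH as [[ph ps] [H1 [H2 H3]]]. simpl in *.
      exists (fun u => ph (qop (sigma z) u), fun s => Linv z (ps s)). simpl. split; [|split].
      + intros s. apply (Qinj z). rewrite HpiL, H1. reflexivity.
      + intros s. rewrite HL2, H2. reflexivity.
      + intros u Hu. rewrite H3; [apply HL1|]. rewrite Hh, Hsig, Hu. reflexivity. }
  destruct (my_choice _ HP) as [Phi HPhi].
  set (phi := fun x => fst (Phi x)). set (psi := fun x => snd (Phi x)).
  assert (Hpsi : forall x s, pi (psi x s) = x) by (intros; apply HPhi).
  assert (Hphipsi : forall x s, phi x (psi x s) = s) by (intros; apply HPhi).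
  assert (Hpsiphi : forall x u, pi u = x -> psi x (phi x u) = u) by (intros; apply HPhi; assumption).
  clearbody phi psi. clear HPhi Phi HP.
  assert (Hth : forall x, exists t : Q -> Sym S, forall y s,
             sfun (t y) s = phi (qop x y) (qop (sigma x) (psi y s))).
  { intros x. apply (my_choice (fun y (t : Sym S) => forall s,
             sfun t s = phi (qop x y) (qop (sigma x) (psi y s)))).
    intros y.
    unshelve eexists (@SymElt S (fun s => phi (qop x y) (qop (sigma x) (psi y s)))
                         (fun s => phi y (Linv x (psi (qop x y) s))) _ _).
    - intros s. cbv beta. rewrite Hpsiphi. { rewrite HL1. apply Hphipsi. }
      rewrite Hh, Hsig, Hpsi. reflexivity.
    - intros s. cbv beta. rewrite Hpsiphi.
      { rewrite HL2. apply Hphipsi. }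
      apply (Qinj x). rewrite HpiL, Hpsi. reflexivity.
    - intros s. reflexivity. }
  destruct (my_choice _ Hth) as [theta Htheta]. clear Hth.
  destruct (Hii (Sym S) theta) as [gam Hgam].
  { split.
    - intros x y z. apply sym_elt_eq. intro s. simpl. rewrite !Htheta.
      rewrite (Hpsiphi (qop x z) (qop (sigma x) (psi z s))).
      2:{ rewrite Hh, Hsig, Hpsi. reflexivity. }
      rewrite (Hpsiphi (qop y z) (qop (sigma y) (psi z s))).
      2:{ rewrite Hh, Hsig, Hpsi. reflexivity. }
      rewrite (qop_dist x y z). f_equal.
      rewrite (qop_dist (sigma x) (sigma y)). apply Hc. rewrite Hh, !Hsig. reflexivity.
    - intros x. apply sym_elt_eq. intro s. simpl. rewrite Htheta.
      rewrite (Hc (sigma x) (psi x s)). 2:{ rewrite Hsig, Hpsi. reflexivity. }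
      repeat rewrite qop_idem. apply Hphipsi. }
  exists S, (fun u => (pi u, sinv (gam (pi u)) (phi (pi u) u))). split; [|split].
  - exists (fun v : Q * S => psi (fst v) (sfun (gam (fst v)) (snd v))). split.
    + intros u. simpl. rewrite sinvK. apply Hpsiphi. reflexivity.
    + intros [x s]. simpl. rewrite Hpsi, Hphipsi, sfunK. reflexivity.
  - intros u v. simpl. unfold triv_op. simpl. rewrite Hh. f_equal.
    pose proof (f_equal (fun p => sfun p (phi (pi v) v)) (Hgam (pi u) (pi v))) as H.
    simpl in H. rewrite Htheta in H. rewrite Hpsiphi in H by reflexivity.
    rewrite (Hc (sigma (pi u)) u) in H by apply Hsig.
    rewrite H, sfunK. reflexivity.
  - intros u. reflexivity.
Qed.

Theorem proposition3p2 (Q : quandle) (HQ : connected Q) :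
  ((forall (S : Type) (theta : Q -> Q -> Sym S),
       quandle_cocycle theta -> cohomologous_trivial theta)
   <-> (forall (K : group) (theta : Q -> Q -> K),
       quandle_cocycle theta -> cohomologous_trivial theta))
  /\ ((forall (K : group) (theta : Q -> Q -> K),
       quandle_cocycle theta -> cohomologous_trivial theta)
   <-> simply_connected Q).
Proof.
  split; split.
  - apply i_to_ii.
  - intros H S. apply H.
  - apply ii_to_iii; assumption.
  - apply iii_to_ii.
Qed.
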